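(* For every $u\in S_n$ and every $J\subseteq[n]$, \[ \mathrm{wt}(\Delta_J u)=t^{\mathrm{des}(u)}q^{\mathrm{maj}(u)}\prod_{j\in J\,\triangle\,\mathrm{Des}(u)} tq^j,\] where $J\triangle\mathrm{Des}(u)=(J\cup\mathrm{Des}(u))\setminus(J\cap\mathrm{Des}(u))$ is the symmetric difference.
   Context: $S_n$ is the set of permutations of $[n]=\{1,\dots,n\}$, written as words $u=u_1\cdots u_n$, and regarded as elements of $B_n$ with all letters positive. $B_n$ is the set of signed permutations: words $w=w_1\cdots w_n$ on the alphabet $\{\bar 1,1,\dots,\bar n,n\}$ (where $\bar i=-i$, $\bar{\bar i}=i$) such that $|w_1|\cdots|w_n|$ is a permutation in $S_n$. The alphabet is totally ordered by $\bar 1<\bar 2<\cdots<\bar n<1<2<\cdots<n$. For a word $w$ over a totally ordered alphabet, $\mathrm{Des}(w)=\{i: w_i>w_{i+1}\}$, $\mathrm{des}(w)=|\mathrm{Des}(w)|$, and $\mathrm{maj}(w)=\sum_{i\in\mathrm{Des}(w)} i$. For $w\in B_n$: $\mathrm{fdes}(w)=2\,\mathrm{des}(w)+1$ if $w_1<0$ and $\mathrm{fdes}(w)=2\,\mathrm{des}(w)$ if $w_1>0$; $\mathrm{fmaj}(w)=2\,\mathrm{maj}(w)+|\{i:w_i<0\}|$; $\mathrm{wt}(w)=t^{\mathrm{fdes}(w)}q^{\mathrm{fmaj}(w)}$. For $1\le i\le n$, $\Delta_i w=\overline{w_1}\cdots\overline{w_i}\,w_{i+1}\cdots w_n$ (negate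 the first $i$ letters). These operators commute, and for $J=\{j_1<\cdots<j_k\}\subseteq[n]$, $\Delta_J=\Delta_{j_1}\cdots\Delta_{j_k}$ ($\Delta_\emptyset$ is the identity). *)

(* Defs.v *)
From HB Require Import structures.
From mathcomp Require Import all_boot all_order all_algebra.
Set Implicit Arguments. Unset Strict Implicit. Unset Printing Implicit Defensive.
Import Order.TTheory GRing.Theory Num.Theory.
Local Open Scope ring_scope.

(* Letters of signed permutations are nonzero integers; -i stands for \bar i.
   Total order  \bar 1 < \bar 2 < ... < \bar n < 1 < 2 < ... < n  :
   ltB x y  <=>  x is strictly smaller than y in this order. *)
Definition ltB (x y : int) : bool :=
  if (x < 0) && (y < 0) then y < x
  else if x < 0 then true
  else if y < 0 then false
  else x < y.

(* Descent set of a word w of length n, as a subset of [n] = {1..n} inside 'I_n.+1: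
   i \in Des(w) iff 1 <= i < n and w_i > w_{i+1} (1-indexed). *)
Definition DesS (n : nat) (w : seq int) : {set 'I_n.+1} :=
  [set i : 'I_n.+1 | (0 < i < n)%N && ltB (nth 0 w i) (nth 0 w i.-1)].

Definition des (n : nat) (w : seq int) : nat := #|DesS n w|.
Definition maj (n : nat) (w : seq int) : nat := (\sum_(i in DesS n w) (i : nat))%N.

Definition fdes (n : nat) (w : seq int) : nat :=
  ((des n w).*2 + (nth (0:int) w 0 < 0)%R)%N.
Definition fmaj (n : nat) (w : seq int) : nat :=
  ((maj n w).*2 + count (fun x : int => (x < 0)%R) w)%N.

Definition wt (R : comPzRingType) (n : nat) (t q : R) (w : seq int) : R :=
  t ^+ fdes n w * q ^+ fmaj n w.

Definition Delta (i : nat) (w : seq int) : seq int :=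
  [seq (if (p.1 < i)%N then - p.2 else p.2) | p <- zip (iota 0 (size w)) w].

(* Delta_J = Delta_{j1} ... Delta_{jk} for J = {j1 < ... < jk} *)
Definition DeltaJ (n : nat) (J : {set 'I_n.+1}) (w : seq int) : seq int :=
  foldr Delta w (sort leq (map (fun j : 'I_n.+1 => nat_of_ord j) (enum J))).

Definition inSn (n : nat) (u : seq int) : Prop :=
  perm_eq u [seq (i%:Z) | i <- iota 1 n].

(* Main.v *)
Require Import Defs.
From HB Require Import structures.
From mathcomp Require Import all_boot all_order all_algebra.
Import Order.TTheory GRing.Theory Num.Theory.
Local Open Scope ring_scope.

Definition sg (s : bool) (x : int) : int := if s then - x else x.

Lemma ltB_sg s (a b : int) : 0 < a -> 0 < b -> ltB (sg s a) (sg s b) = (a < b).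
Proof.
move=> ha hb; rewrite /ltB /sg; case: s.
  by rewrite !oppr_lt0 ha hb /= ltrN2.
by rewrite (lt_gtF ha) (lt_gtF hb).
Qed.

Lemma ltB_sgN s (a b : int) : 0 < a -> 0 < b -> ltB (sg s a) (sg (~~ s) b) = s.
Proof.
move=> ha hb; rewrite /ltB /sg; case: s => /=.
  by rewrite !oppr_lt0 ha (lt_gtF hb).
by rewrite (lt_gtF ha) oppr_lt0 hb.
Qed.

Lemma size_Delta k w : size (Delta k w) = size w.
Proof. by rewrite /Delta size_map size_zip size_iota minnn. Qed.

Lemma nth_Delta k w p :
  nth 0 (Delta k w) p = if (p < k)%N then - nth 0 w p else nth 0 w p.
Proof.
rewrite /Delta; case: (ltnP p (size w)) => hp.
  rewrite (nth_map (0%N, 0)) ?size_zip ?size_iota ?minnn //.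
  by rewrite nth_zip ?size_iota // nth_iota.
rewrite !nth_default ?size_map ?size_zip ?size_iota ?minnn //.
by case: ifP => // _; rewrite oppr0.
Qed.

Lemma nth_F js u p : nth 0 (foldr Delta u js) p =
  sg (odd (count (fun k => (p < k)%N) js)) (nth 0 u p).
Proof.
elim: js => [|k js IH] //=; rewrite nth_Delta IH /sg {IH}.
case: (p < k)%N => /=; case: odd => //=; by rewrite ?opprK ?add0n.
Qed.

Lemma size_F js u : size (foldr Delta u js) = size u.
Proof. by elim: js => //= k js IH; rewrite size_Delta IH. Qed.

Lemma Delta_cat k w : (k <= size w)%N ->
  Delta k w = map -%R (take k w) ++ drop k w.
Proof.
move=> hk; apply: (@eq_from_nth _ 0).
  by rewrite size_Delta size_cat size_map size_takel // size_drop subnKC.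
move=> p; rewrite size_Delta => hp.
rewrite nth_Delta nth_cat size_map size_takel //.
case: ifP => hpk.
  by rewrite (nth_map 0) ?size_takel // nth_take.
by rewrite nth_drop subnKC // leqNgt hpk.
Qed.

Lemma count_sg b (s : seq int) :
  all (fun x => ((x < 0) == b) && (x != 0)) s ->
  count (fun x => x < 0) s = (b * size s)%N /\
  count (fun x => - x < 0) s = ((~~ b) * size s)%N.
Proof.
elim: s => [|x s IH] /=; first by rewrite !muln0.
move=> /andP[/andP[/eqP hx hx0] hs]; have [-> ->] := IH hs.
rewrite hx oppr_lt0 lt0r hx0 /= leNgt hx.
by clear IH hs; case: b hx => /= _; rewrite !mul1n !mul0n.
Qed.

Lemma count_all_gt (rest : seq nat) j p : all (fun k => (j < k)%N) rest ->
  (p <= j)%N -> count (fun k => (p < k)%N) rest = size rest.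
Proof.
move=> hall hp; apply/eqP; rewrite -all_count; apply/allP => k hk.
exact: leq_ltn_trans hp (allP hall k hk).
Qed.
From Stdlib Require Import Lia.

Lemma oppsg s (a : int) : - sg s a = sg (~~ s) a.
Proof. by case: s => //=; rewrite opprK. Qed.

Lemma sg_lt0 s (a : int) : 0 < a -> (sg s a < 0) = s.
Proof. by move=> ha; case: s => /=; rewrite ?oppr_lt0 ?ha ?(lt_gtF ha). Qed.

Lemma sg_neq0 s (a : int) : 0 < a -> sg s a != 0.
Proof. by move=> ha; case: s => /=; rewrite ?oppr_eq0 gt_eqF. Qed.

Lemma sum_toggle (n : nat) (A A' : {set 'I_n.+1}) x (f : 'I_n.+1 -> nat) :
  A' :\ x = A :\ x ->
  (\sum_(i in A') f i + (x \in A) * f x = \sum_(i in A) f i + (x \in A') * f x)%N.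
Proof.
have H : forall B : {set 'I_n.+1},
    \sum_(i in B) f i = ((x \in B) * f x + \sum_(i in B :\ x) f i)%N.
  move=> B; case: (boolP (x \in B)) => hx; first by rewrite (big_setD1 _ hx) mul1n.
  rewrite mul0n add0n; apply: eq_bigl => i; rewrite in_setD1.
  by case: eqVneq => [->|] //=; rewrite (negbTE hx).
move=> E; rewrite (H A) (H A') E.
rewrite -?plusE -?multE; lia.
Qed.

Lemma card_toggle (n : nat) (A A' : {set 'I_n.+1}) x :
  A' :\ x = A :\ x -> (#|A'| + (x \in A) = #|A| + (x \in A'))%N.
Proof.
move=> E; have := @sum_toggle n A A' x (fun _ => 1%N) E.
by rewrite !sum1_card !muln1.
Qed.

Arguments count_all_gt {rest j p}.
Arguments count_sg {b s}.
Arguments card_toggle {n A A' x}.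
Arguments Delta_cat {k w}.
Lemma main_ind n (u : seq int) (js : seq nat) :
  size u = n -> (forall p, (p < n)%N -> 0 < nth 0 u p) ->
  sorted ltn js -> all (fun k => (0 < k <= n)%N) js ->
  fdes n (foldr Delta u js) =
    (des n u + #|([set i : 'I_n.+1 | (i : nat) \in js] :|: DesS n u) :\:
                 ([set i : 'I_n.+1 | (i : nat) \in js] :&: DesS n u)|)%N /\
  fmaj n (foldr Delta u js) =
    (maj n u + \sum_(i in ([set i : 'I_n.+1 | (i : nat) \in js] :|: DesS n u) :\:
                 ([set i : 'I_n.+1 | (i : nat) \in js] :&: DesS n u)) (i : nat))%N.
Proof.
move=> hsz hpos; elim: js => [|j rest IH] hsort hall.
  have -> : ([set i : 'I_n.+1 | (i : nat) \in [::]] :|: DesS n u) :\: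
            ([set i : 'I_n.+1 | (i : nat) \in [::]] :&: DesS n u) = DesS n u.
    by apply/setP => i; rewrite !inE.
  have h0 : (nth 0 u 0 < 0) = false.
    clear hall hsort; case: n hsz hpos => [|n'] hsz hpos; first by rewrite nth_default ?hsz.
    by rewrite lt_gtF ?hpos.
  have hc : count (fun x : int => x < 0) u = 0%N.
    apply/eqP; rewrite -leqn0 leqNgt -has_count; apply/hasPn => x hx.
    by rewrite -(nth_index 0 hx) lt_gtF // hpos // -hsz index_mem.
  by rewrite /fdes /fmaj /= h0 hc -!addnn !addn0.
have hsr : sorted ltn rest := path_sorted hsort.
have hgt : all (fun k => (j < k)%N) rest := order_path_min ltn_trans hsort.
move: hall => /= /andP[/andP[hj0 hjn] hall'].
have [IHf IHm] := IH hsr hall'.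
move: IHf IHm; set K := [set i : 'I_n.+1 | (i : nat) \in rest].
set K' := [set i : 'I_n.+1 | (i : nat) \in j :: rest].
set D := DesS n u.
rewrite /=; set w := foldr Delta u rest => IHf IHm.
set s := odd (size rest).
have hw : forall p, (p <= j)%N -> nth 0 w p = sg s (nth 0 u p).
  by move=> p hp; rewrite nth_F (count_all_gt hgt hp).
have hwsz : size w = n by rewrite size_F.
have hjl : (j < n.+1)%N by rewrite ltnS.
pose x : 'I_n.+1 := Ordinal hjl.
have hx : (x : nat) = j by [].
have hs : (j < n)%N || ~~ s.
  case: ltnP => //= hnj; rewrite /s.
  case: rest {IH hsr K K' IHf IHm w hw hwsz s hsort} hgt hall' => [|k r] //= /andP[hjk _] /andP[/andP[_ hkn] _].
  by have := leq_trans hjk (leq_trans hkn hnj); rewrite ltnn.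
have hn0 : (0 < n)%N := leq_trans hj0 hjn.
have hposj : forall p, (p <= j)%N -> (p < n)%N -> 0 < nth 0 u p.
  by move=> p _; apply: hpos.
set A := DesS n w; set A' := DesS n (Delta j w).
have hAA : A' :\ x = A :\ x.
  apply/setP => i; rewrite !in_setD1; case: eqVneq => //= hix.
  have hij : (i : nat) != j by apply: contra_neq hix => hi; apply: val_inj.
  rewrite !inE !nth_Delta.
  case: (ltnP i j) => hi.
    case hi0 : (0 < i < n)%N => //=.
    have hi1 : (i.-1 < j)%N := leq_ltn_trans (leq_pred i) hi.
    move/andP: hi0 => [hi0 hin].
    have p1 := hpos i hin; have p2 := hpos i.-1 (leq_ltn_trans (leq_pred i) hin).
    by rewrite hi1 (hw i (ltnW hi)) (hw i.-1 (ltnW hi1)) !oppsg !ltB_sg.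
  have hji : (j < i)%N by rewrite ltn_neqAle hi andbT eq_sym.
  have hi1 : (j <= i.-1)%N by rewrite -ltnS prednK // (leq_ltn_trans _ hji).
  have f1 : (i < j)%N = false by rewrite ltnNge (ltnW hji).
  have f2 : (i.-1 < j)%N = false by rewrite ltnNge hi1.
  by rewrite f2.
have hxA : (x \in A) = (x \in D).
  rewrite !inE hx; case hj : (0 < j < n)%N => //=.
  move/andP: hj => [_ hjn'].
  have hj1 : (j.-1 < n)%N := leq_ltn_trans (leq_pred j) hjn'.
  rewrite (hw j (leqnn j)) (hw j.-1 (leq_pred j)) ltB_sg ?hpos //.
  by rewrite -[nth 0 u j]/(sg false _) -[nth 0 u j.-1]/(sg false _) ltB_sg ?hpos.
have hxA' : (x \in A') = ((j < n)%N && s).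
  rewrite !inE hx hj0 /=; case hjn' : (j < n)%N => //=.
  have hj1 : (j.-1 < n)%N := leq_ltn_trans (leq_pred j) hjn'.
  rewrite !nth_Delta ltnn ltn_predL hj0 (hw j (leqnn j)) (hw j.-1 (leq_pred j)) oppsg ltB_sgN ?hpos //.
have e1 := card_toggle hAA.
have e2 : (\sum_(i in A') (i : nat) + (x \in D) * j =
           \sum_(i in A) (i : nat) + ((j < n)%N && s) * j)%N.
  by have := @sum_toggle n A A' x (fun i => i : nat) hAA; rewrite hxA hxA'.
rewrite hxA hxA' /= in e1.
have e3 : (nth 0 (Delta j w) 0 < 0) = ~~ s.
  by rewrite nth_Delta hj0 hw // oppsg sg_lt0 ?hpos.
have e4 : (nth 0 w 0 < 0) = s by rewrite hw // sg_lt0 ?hpos.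
have htake : all (fun y => ((y < 0) == s) && (y != 0)) (take j w).
  apply/(all_nthP 0) => p; rewrite size_takel ?hwsz // => hp.
  have hpn : (p < n)%N := leq_trans hp hjn.
  by rewrite nth_take // (hw p (ltnW hp)) sg_lt0 ?hpos // eqxx sg_neq0 ?hpos.
have [c1 c2] := count_sg htake.
have e5 : (count (fun y : int => (y < 0)%R) (Delta j w) + s * j =
           count (fun y : int => (y < 0)%R) w + (~~ s) * j)%N.
  rewrite Delta_cat ?hwsz // count_cat count_map.
  have -> : count (fun y : int => (y < 0)%R) w =
     (count (fun y : int => (y < 0)%R) (take j w) + count (fun y : int => (y < 0)%R) (drop j w))%N
    by rewrite -count_cat cat_take_drop.
  have -> : count (preim -%R (fun y : int => y < 0)) (take j w) =
            count (fun y : int => - y < 0) (take j w) by [].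
  rewrite c1 c2 size_takel ?hwsz //.
  rewrite -?plusE -?multE; lia.
have hxK : (x \in K) = false.
  rewrite inE hx; apply/negP => hj; have := allP hgt j hj; by rewrite ltnn.
have hSS : (K' :|: D) :\: (K' :&: D) :\ x = (K :|: D) :\: (K :&: D) :\ x.
  apply/setP => i; rewrite !in_setD1; case: eqVneq => //= hix.
  have hij : (i : nat) != j by apply: contra_neq hix => hi; apply: val_inj.
  by rewrite !inE (negbTE hij).
have hxS : (x \in (K :|: D) :\: (K :&: D)) = (x \in D).
  by rewrite in_setD in_setU in_setI hxK /=; case: (x \in D).
have hxS' : (x \in (K' :|: D) :\: (K' :&: D)) = ~~ (x \in D).
  have hxK' : (x \in K') = true by rewrite inE hx mem_head.
  by rewrite in_setD in_setU in_setI hxK' /=; case: (x \in D).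
have e6 := card_toggle hSS.
have e7 : (\sum_(i in (K' :|: D) :\: (K' :&: D)) (i : nat) + (x \in D) * j =
           \sum_(i in (K :|: D) :\: (K :&: D)) (i : nat) + (~~ (x \in D)) * j)%N.
  by have := @sum_toggle n _ _ x (fun i => i : nat) hSS; rewrite hxS hxS'.
rewrite hxS hxS' in e6.
rewrite /fdes /fmaj /des /maj -/A -/A' -/D e3.
move: IHf IHm; rewrite /fdes /fmaj /des /maj -/A -/D e4 => IHf IHm.
move: hs IHf IHm e1 e2 e5 e6 e7.
set a := #|A|; set a' := #|A'|; set dd := #|D|.
set sK := #|(K :|: D) :\: (K :&: D)|; set sK' := #|(K' :|: D) :\: (K' :&: D)|.
set mA := \sum_(i in A) (i : nat); set mA' := \sum_(i in A') (i : nat).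
set mD := \sum_(i in D) (i : nat).
set mS := \sum_(i in (K :|: D) :\: (K :&: D)) (i : nat).
set mS' := \sum_(i in (K' :|: D) :\: (K' :&: D)) (i : nat).
set cn := count _ w; set cn' := count _ (Delta j w).
clearbody a a' dd sK sK' mA mA' mD mS mS' cn cn'.
case: (x \in D); case Es: s; case: (j < n)%N => /= hs;
  rewrite -!addnn ?mul1n ?mul0n ?addn0 ?add0n -?plusE -?multE; first [ by case: hs | lia ].
Qed.

Arguments main_ind {n u js}.
Theorem lemma9 (R : comPzRingType) (t q : R) (n : nat) (u : seq int)
    (J : {set 'I_n.+1}) :
  inSn n u -> ord0 \notin J ->
  wt n t q (DeltaJ J u) =
    t ^+ des n u * q ^+ maj n u *
    \prod_(j in (J :|: DesS n u) :\: (J :&: DesS n u)) (t * q ^+ (j : nat)).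
Proof.
move=> hu hJ0.
have hsz : size u = n by rewrite (perm_size hu) size_map size_iota.
have hpos : forall p, (p < n)%N -> 0 < nth 0 u p.
  move=> p hp; have : nth 0 u p \in u by rewrite mem_nth ?hsz.
  rewrite (perm_mem hu) => /mapP [i]; rewrite mem_iota => /andP[hi _] ->.
  by rewrite ltz_nat.
set js := sort leq (map (fun j : 'I_n.+1 => nat_of_ord j) (enum J)).
have hsort : sorted ltn js.
  rewrite ltn_sorted_uniq_leq sort_uniq sort_sorted ?andbT; last exact: leq_total.
  by rewrite map_inj_uniq ?enum_uniq //; apply: val_inj.
have hall : all (fun k => (0 < k <= n)%N) js.
  apply/allP => k; rewrite mem_sort => /mapP [i]; rewrite mem_enum => hi ->.
  have hin : (i <= n)%N by rewrite -ltnS ltn_ord.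
  rewrite hin andbT lt0n; apply: contraNneq hJ0 => h.
  by have -> : ord0 = i by apply: val_inj.
have hK : [set i : 'I_n.+1 | (i : nat) \in js] = J.
  apply/setP => i; rewrite inE mem_sort; apply/mapP/idP.
    by move=> [i' hi' /val_inj ->]; rewrite -mem_enum.
  by move=> hi; exists i; rewrite ?mem_enum.
have [hf hm] := main_ind hsz hpos hsort hall.
rewrite hK in hf hm.
rewrite /wt /DeltaJ -/js hf hm big_split /= prodr_const.
rewrite -(big_morph (fun m => q ^+ m) (exprD q) (expr0 q)) !exprD.
by rewrite mulrACA.
Qed.
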